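(* Let $t_1<\tau$ be fixed independently of $z$, and for each $z$ let $\mathbf y(t)$ and $\mathbf x_h(t)$ satisfy $$\frac{d}{dt}\mathbf y=\mathbf A\mathbf y+h(\mathbf y)+\mathbf e_{\mathbf y},\qquad \frac{d}{dt}\mathbf x_h=\mathbf A\mathbf x_h+h(\mathbf x_h),\qquad \mathbf x_h(t_1)=\mathbf y(t_1),$$ where $\sup_{t\in[t_1,\tau]}\|\mathbf e_{\mathbf y}(t)\|=O(z^{-1})$, and $h:\mathbb R^4\to\mathbb R^4$ is such that for all $\mathbf x_1,\mathbf x_2$, $h(\mathbf x_1)-h(\mathbf x_2)=\mathbf L_h(\mathbf x_1,\mathbf x_2)(\mathbf x_1-\mathbf x_2)$ for a $4\times4$ matrix $\mathbf L_h(\mathbf x_1,\mathbf x_2)$ whose entries satisfy $|[\mathbf L_h(\mathbf x_1,\mathbf x_2)]_{ij}|\le L_h$, with $L_h>0$ a constant independent of $z$. Then $$\sup_{t\in[t_1,\tau]}\|\mathbf y(t)-\mathbf x_h(t)\|=O(z^{-1}).$$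
   Context: $\mathbf A=\begin{bmatrix}-1&3z&z&z\\0&-3z&0&0\\0&2z&-z&0\\1&0&0&-z\end{bmatrix}$ for $z>0$. $O(z^{-1})$ means bounded by $Kz^{-1}$ with $K$ independent of $z$, for all sufficiently large $z$. *)

(* Defs.v *)
From Stdlib Require Import Reals Lra.
Open Scope R_scope.

(* Vectors of R^4 are functions nat -> R; only indices 0..3 are meaningful.
   Matrices are functions nat -> nat -> R, indices 0..3. *)
Definition vec := nat -> R.
Definition mat := nat -> nat -> R.

Definition vsub (a b : vec) : vec := fun i => a i - b i.

Definition matvec (M : mat) (v : vec) : vec :=
  fun i => sum_f_R0 (fun j => M i j * v j) 3.

Definition vnorm (v : vec) : R := sqrt (sum_f_R0 (fun i => v i ^ 2) 3).

Definition Amat (z : R) : mat := fun i j =>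
  match i, j with
  | 0, 0 => -1 | 0, 1 => 3 * z | 0, 2 => z | 0, 3 => z
  | 1, 1 => - (3 * z)
  | 2, 1 => 2 * z | 2, 2 => - z
  | 3, 0 => 1 | 3, 3 => - z
  | _, _ => 0
  end.

Definition cont_on (f : R -> R) (a b : R) : Prop :=
  forall t, a <= t <= b ->
  forall eps, 0 < eps -> exists delta, 0 < delta /\
    forall s, a <= s <= b -> Rabs (s - t) < delta -> Rabs (f s - f t) < eps.

(* Main.v *)
Require Import Defs.
From Stdlib Require Import Reals Lra Psatz.
Open Scope R_scope.


Lemma sq2c (c x y : R) : 0 < c -> 2 * x * y <= c * x^2 + y^2 / c.
Proof.
  intros Hc. assert (H : 0 <= (c*x - y)^2) by apply pow2_ge_0.
  assert (E : c * x^2 + y^2/c - 2*x*y = (c*x-y)^2 / c) by (field; lra).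
  assert (0 <= (c*x-y)^2/c) by (unfold Rdiv; apply Rmult_le_pos; [lra| left; apply Rinv_0_lt_compat; lra]). lra.
Qed.

Lemma sq2d (c d x y : R) : 0 < c -> c * d = 1 -> 2 * x * y <= c * x^2 + d * y^2.
Proof.
  intros Hc Hd. pose proof (sq2c c x y Hc).
  replace d with (/c). unfold Rdiv in H. lra.
  apply (Rmult_eq_reg_l c); [|lra]. rewrite Rinv_r; lra.
Qed.

Lemma pb (x r B : R) : Rabs r <= B -> x * r <= Rabs x * B.
Proof.
  intros H. apply Rle_trans with (Rabs (x*r)). apply Rle_abs.
  rewrite Rabs_mult. apply Rmult_le_compat_l. apply Rabs_pos. exact H.
Qed.

Lemma key (z Lh d0 d1 d2 d3 r0 r1 r2 r3 e0 e1 e2 e3 : R) :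
  1 <= z -> 0 < Lh ->
  Rabs r0 <= Lh * (Rabs d0 + Rabs d1 + Rabs d2 + Rabs d3) ->
  Rabs r1 <= Lh * (Rabs d0 + Rabs d1 + Rabs d2 + Rabs d3) ->
  Rabs r2 <= Lh * (Rabs d0 + Rabs d1 + Rabs d2 + Rabs d3) ->
  Rabs r3 <= Lh * (Rabs d0 + Rabs d1 + Rabs d2 + Rabs d3) ->
  2 * (d0 + 5/3 * d1 + d2 + d3) *
     ((-d0 + 3*z*d1 + z*d2 + z*d3 + r0 + e0) + 5/3*(-(3*z)*d1 + r1 + e1)
      + (2*z*d1 - z*d2 + r2 + e2) + (d0 - z*d3 + r3 + e3))
  + z * (4*d1*(-(3*z)*d1 + r1 + e1) + 2*d2*(2*z*d1 - z*d2 + r2 + e2)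
         + 2*d3*(d0 - z*d3 + r3 + e3))
  <= (300 * Lh + 100 * Lh^2 + 20) *
       ((d0 + 5/3 * d1 + d2 + d3)^2 + z * (2 * d1^2 + d2^2 + d3^2))
     + 10 * (e0^2 + e1^2 + e2^2 + e3^2).
Proof.
  intros Hz HL H0 H1 H2 H3.
  set (u := d0 + 5/3 * d1 + d2 + d3).
  set (L := Lh) in *.
  set (U := Rabs u). set (A1 := Rabs d1). set (A2 := Rabs d2). set (A3 := Rabs d3).
  set (T := U + A1 + A2 + A3).
  assert (HU : 0 <= U) by apply Rabs_pos.
  assert (PA1 : 0 <= A1) by apply Rabs_pos.
  assert (PA2 : 0 <= A2) by apply Rabs_pos.
  assert (PA3 : 0 <= A3) by apply Rabs_pos.
  assert (HA0 : Rabs d0 <= U + 5/3*A1 + A2 + A3).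
  { replace d0 with (u - 5/3*d1 - d2 - d3) by (unfold u; ring).
    unfold U, A1, A2, A3.
    pose proof (Rabs_triang (u - 5/3*d1 - d2) (-d3)).
    pose proof (Rabs_triang (u - 5/3*d1) (-d2)).
    pose proof (Rabs_triang u (-(5/3*d1))).
    rewrite !Rabs_Ropp in *. rewrite Rabs_mult in *.
    rewrite (Rabs_right (5/3)) in * by lra.
    unfold Rminus in *. lra. }
  assert (HS : L * (Rabs d0 + Rabs d1 + Rabs d2 + Rabs d3) <= 3 * L * T).
  { fold A1 A2 A3. unfold T.
    apply Rle_trans with (L * (3 * (U + A1 + A2 + A3))).
    apply Rmult_le_compat_l; lra. lra. }
  assert (R0 : Rabs r0 <= 3*L*T) by lra.
  assert (R1 : Rabs r1 <= 3*L*T) by lra.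
  assert (R2 : Rabs r2 <= 3*L*T) by lra.
  assert (R3 : Rabs r3 <= 3*L*T) by lra.
  assert (SU : u^2 = U^2) by (unfold U; rewrite pow2_abs; auto).
  assert (S1 : d1^2 = A1^2) by (unfold A1; rewrite pow2_abs; auto).
  assert (S2 : d2^2 = A2^2) by (unfold A2; rewrite pow2_abs; auto).
  assert (S3 : d3^2 = A3^2) by (unfold A3; rewrite pow2_abs; auto).
  assert (Hz0 : 0 <= z) by lra.
  assert (AbsZ : forall d, Rabs (z*d) = z * Rabs d).
  { intro d. rewrite Rabs_mult, Rabs_right by lra. auto. }
  assert (B0 : u * r0 <= U * (3*L*T)) by (apply pb; auto).
  assert (B1 : u * r1 <= U * (3*L*T)) by (apply pb; auto).
  assert (B2 : u * r2 <= U * (3*L*T)) by (apply pb; auto).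
  assert (B3 : u * r3 <= U * (3*L*T)) by (apply pb; auto).
  assert (P1 : L * (U * T) <= L * (5/2*U^2 + (A1^2+A2^2+A3^2)/2)).
  { apply Rmult_le_compat_l. lra. unfold T.
    pose proof (sq2c 1 U A1). pose proof (sq2c 1 U A2). pose proof (sq2c 1 U A3). lra. }
  assert (C0 : 2*u*e0 <= U^2 + e0^2) by (pose proof (sq2c 1 u e0); lra).
  assert (C1 : 2*u*(5/3*e1) <= U^2 + (5/3*e1)^2) by (pose proof (sq2c 1 u (5/3*e1)); lra).
  assert (C2 : 2*u*e2 <= U^2 + e2^2) by (pose proof (sq2c 1 u e2); lra).
  assert (C3 : 2*u*e3 <= U^2 + e3^2) by (pose proof (sq2c 1 u e3); lra).
  assert (Q1 : z^2*d1^2 = z^2*A1^2) by (rewrite S1; auto).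
  assert (Q2 : z^2*d2^2 = z^2*A2^2) by (rewrite S2; auto).
  assert (Q3 : z^2*d3^2 = z^2*A3^2) by (rewrite S3; auto).
  assert (Q1' : z*d1^2 = z*A1^2) by (rewrite S1; auto).
  assert (Q2' : z*d2^2 = z*A2^2) by (rewrite S2; auto).
  assert (Q3' : z*d3^2 = z*A3^2) by (rewrite S3; auto).
  assert (X12 : (z*d1)*(z*d2) <= (z*A1)*(z*A2)).
  { pose proof (pb (z*d1) (z*d2) (z*A2)). rewrite !AbsZ in H. apply H. apply Rle_refl. }
  assert (X12' : 2*(2*(z*A1))*(z*A2) <= 2*(2*(z*A1))^2 + 1/2*(z*A2)^2) by (apply sq2d; lra).
  assert (D1 : (z*d1)*r1 <= (z*A1)*(3*L*T)) by (pose proof (pb (z*d1) r1 _ R1) as W; rewrite AbsZ in W; exact W).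
  assert (D2 : (z*d2)*r2 <= (z*A2)*(3*L*T)) by (pose proof (pb (z*d2) r2 _ R2) as W; rewrite AbsZ in W; exact W).
  assert (D3 : (z*d3)*r3 <= (z*A3)*(3*L*T)) by (pose proof (pb (z*d3) r3 _ R3) as W; rewrite AbsZ in W; exact W).
  assert (F1 : 2*(z*A1)*(6*L*U) <= 1*(z*A1)^2 + 1*(6*L*U)^2) by (apply sq2d; lra).
  assert (F2 : 2*(z*A2)*(3*L*U) <= 1/2*(z*A2)^2 + 2*(3*L*U)^2) by (apply sq2d; lra).
  assert (F3 : 2*(z*A3)*(3*L*U) <= 1/2*(z*A3)^2 + 2*(3*L*U)^2) by (apply sq2d; lra).
  assert (Lz : 0 <= L*z) by nra.
  assert (G1 : (L*z)*(A1*(A1+A2+A3)) <= (L*z)*(2*A1^2 + A2^2/2 + A3^2/2)).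
  { apply Rmult_le_compat_l; auto. pose proof (sq2c 1 A1 A2). pose proof (sq2c 1 A1 A3). lra. }
  assert (G2 : (L*z)*(A2*(A1+A2+A3)) <= (L*z)*(A1^2/2 + 2*A2^2 + A3^2/2)).
  { apply Rmult_le_compat_l; auto. pose proof (sq2c 1 A2 A1). pose proof (sq2c 1 A2 A3). lra. }
  assert (G3 : (L*z)*(A3*(A1+A2+A3)) <= (L*z)*(A1^2/2 + A2^2/2 + 2*A3^2)).
  { apply Rmult_le_compat_l; auto. pose proof (sq2c 1 A3 A1). pose proof (sq2c 1 A3 A2). lra. }
  assert (E1 : 2*(z*d1)*(2*e1) <= 1*(z*d1)^2 + 1*(2*e1)^2) by (apply sq2d; lra).
  assert (E2 : 2*(z*d2)*e2 <= 1/2*(z*d2)^2 + 2*e2^2) by (apply sq2d; lra).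
  assert (E3 : 2*(z*d3)*e3 <= 1/2*(z*d3)^2 + 2*e3^2) by (apply sq2d; lra).
  assert (H8a : 2*(z*d3)*u <= 1/2*(z*d3)^2 + 2*u^2) by (apply sq2d; lra).
  assert (H8b : z * (2*d3*(-d1)) <= z * (d3^2 + d1^2)).
  { apply Rmult_le_compat_l; auto. pose proof (sq2c 1 d3 (-d1)). lra. }
  assert (H8c : z * (2*d3*(-d2)) <= z * (d3^2 + d2^2)).
  { apply Rmult_le_compat_l; auto. pose proof (sq2c 1 d3 (-d2)). lra. }
  assert (LV1 : L*z*A1^2 >= 0) by (apply Rle_ge; apply Rmult_le_pos; nra).
  assert (LV2 : L*z*A2^2 >= 0) by (apply Rle_ge; apply Rmult_le_pos; nra).
  assert (LV3 : L*z*A3^2 >= 0) by (apply Rle_ge; apply Rmult_le_pos; nra).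
  assert (zA1 : z*A1^2 >= A1^2) by nra.
  assert (zA2 : z*A2^2 >= A2^2) by nra.
  assert (zA3 : z*A3^2 >= A3^2) by nra.
  assert (LzA1 : L*(z*A1^2) >= L*A1^2) by nra.
  assert (LzA2 : L*(z*A2^2) >= L*A2^2) by nra.
  assert (LzA3 : L*(z*A3^2) >= L*A3^2) by nra.
  assert (LLU : L^2*U^2 >= 0) by nra.
  assert (LU : L*U^2 >= 0) by nra.
  assert (LLz : L^2*z*A1^2 >= 0 /\ L^2*z*A2^2 >= 0 /\ L^2*z*A3^2 >= 0).
  { repeat split; apply Rle_ge; apply Rmult_le_pos; try apply Rmult_le_pos; nra. }
  assert (e' : e0^2 >= 0 /\ e1^2 >= 0 /\ e2^2 >= 0 /\ e3^2 >= 0) by (repeat split; nra).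
  assert (sqs : A1^2 >= 0 /\ A2^2 >= 0 /\ A3^2 >= 0 /\ U^2 >= 0) by (repeat split; nra).
  assert (zsq : z^2*A1^2 >= 0 /\ z^2*A2^2 >= 0 /\ z^2*A3^2 >= 0) by (repeat split; nra).
  fold u. rewrite SU.
  replace (z * (2 * d1 ^ 2 + d2 ^ 2 + d3 ^ 2)) with (2*(z*d1^2) + z*d2^2 + z*d3^2) by ring.
  rewrite Q1', Q2', Q3'.
  unfold T in *.
  replace d0 with (u - 5/3*d1 - d2 - d3) by (unfold u; ring).
  clearbody T U A1 A2 A3 u L. lra.
Qed.

Definition clamp (a b s : R) := Rmax a (Rmin b s).

Lemma clamp_in a b s : a <= b -> a <= clamp a b s <= b.
Proof. intros; unfold clamp, Rmax, Rmin; repeat destruct Rle_dec; lra. Qed.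

Lemma clamp_id a b s : a <= s <= b -> clamp a b s = s.
Proof. intros; unfold clamp, Rmax, Rmin; repeat destruct Rle_dec; lra. Qed.

Lemma clamp_lip a b s t : a <= b -> Rabs (clamp a b s - clamp a b t) <= Rabs (s - t).
Proof. intros; unfold clamp, Rmax, Rmin; repeat destruct Rle_dec; unfold Rabs; repeat destruct Rcase_abs; lra. Qed.

Lemma clamp_cont f a b c : a <= b -> cont_on f a b ->
  continuity_pt (fun s => f (clamp a b s)) c.
Proof.
  intros Hab Hf. unfold continuity_pt, continue_in, limit1_in, limit_in.
  intros eps He. destruct (Hf (clamp a b c) (clamp_in a b c Hab) eps He) as [del [Hd Hd2]].
  exists del. split; auto. intros x [_ Hx]. simpl in *. unfold R_dist in *.
  apply Hd2. apply clamp_in; auto.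
  eapply Rle_lt_trans. apply clamp_lip; auto. auto.
Qed.

Lemma clamp_deriv f a b c l : a < c < b -> derivable_pt_lim f c l ->
  derivable_pt_lim (fun s => f (clamp a b s)) c l.
Proof.
  intros Hc Hf eps He. destruct (Hf eps He) as [del Hd].
  assert (Hp : 0 < Rmin del (Rmin (c - a) (b - c))).
  { destruct del as [d dp]. simpl. unfold Rmin; repeat destruct Rle_dec; lra. }
  exists (mkposreal _ Hp). intros hh Hh Hlt. simpl in Hlt.
  rewrite (clamp_id a b c) by lra.
  assert (Hm1 := Rmin_l del (Rmin (c - a) (b - c))).
  assert (Hm2 := Rmin_r del (Rmin (c - a) (b - c))).
  assert (Hm3 := Rmin_l (c - a) (b - c)).
  assert (Hm4 := Rmin_r (c - a) (b - c)).
  assert (Habs : -hh <= Rabs hh /\ hh <= Rabs hh) by (split; [rewrite <- Rabs_Ropp|]; apply Rle_abs).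
  rewrite (clamp_id a b (c + hh)) by lra.
  apply Hd; auto. lra.
Qed.

Lemma decr (G G' : R -> R) a b :
  a < b -> (forall c, a <= c <= b -> continuity_pt G c) ->
  (forall t, a < t < b -> derivable_pt_lim G t (G' t)) ->
  (forall t, a < t < b -> G' t <= 0) ->
  forall t, a <= t <= b -> G t <= G a.
Proof.
  intros Hab Hc Hd Hn t Ht.
  destruct (Req_dec t a) as [E|Ne]. subst; lra.
  assert (Hat : a < t) by lra.
  assert (pr1 : forall c, a < c < t -> derivable_pt G c).
  { intros c Hc'. exists (G' c). apply Hd. lra. }
  assert (pr2 : forall c, a < c < t -> derivable_pt id c).
  { intros c _. apply derivable_pt_id. }
  destruct (MVT G id a t pr1 pr2 Hat) as [c [P Eq]].
  - intros c Hc'. apply Hc. lra.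
  - intros c _. apply derivable_continuous_pt, derivable_pt_id.
  - rewrite (derive_pt_eq_0 G c (G' c) (pr1 c P)) in Eq by (apply Hd; lra).
    rewrite (derive_pt_eq_0 id c 1 (pr2 c P)) in Eq by apply derivable_pt_lim_id.
    unfold id in Eq. assert (G' c <= 0) by (apply Hn; lra). nra.
Qed.

Lemma cmult f g x : continuity_pt f x -> continuity_pt g x -> continuity_pt (fun s => f s * g s) x.
Proof. intros H1 H2. exact (continuity_pt_mult f g x H1 H2). Qed.
Lemma cplus f g x : continuity_pt f x -> continuity_pt g x -> continuity_pt (fun s => f s + g s) x.
Proof. intros H1 H2. exact (continuity_pt_plus f g x H1 H2). Qed.
Lemma cminus f g x : continuity_pt f x -> continuity_pt g x -> continuity_pt (fun s => f s - g s) x.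
Proof. intros H1 H2. exact (continuity_pt_minus f g x H1 H2). Qed.
Lemma cconst c x : continuity_pt (fun _ => c) x.
Proof. exact (continuity_pt_const (fun _ => c) x (fun _ _ => eq_refl)). Qed.
Lemma dmult f g x lf lg : derivable_pt_lim f x lf -> derivable_pt_lim g x lg ->
  derivable_pt_lim (fun s => f s * g s) x (lf * g x + f x * lg).
Proof. intros H1 H2. exact (derivable_pt_lim_mult f g x lf lg H1 H2). Qed.
Lemma dplus f g x lf lg : derivable_pt_lim f x lf -> derivable_pt_lim g x lg ->
  derivable_pt_lim (fun s => f s + g s) x (lf + lg).
Proof. intros H1 H2. exact (derivable_pt_lim_plus f g x lf lg H1 H2). Qed.
Lemma dminus f g x lf lg : derivable_pt_lim f x lf -> derivable_pt_lim g x lg ->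
  derivable_pt_lim (fun s => f s - g s) x (lf - lg).
Proof. intros H1 H2. exact (derivable_pt_lim_minus f g x lf lg H1 H2). Qed.
Lemma dconst c x : derivable_pt_lim (fun _ => c) x 0.
Proof. exact (derivable_pt_lim_const c x). Qed.
Lemma dval f x l l' : derivable_pt_lim f x l -> l = l' -> derivable_pt_lim f x l'.
Proof. intros H E; subst; auto. Qed.

Lemma dexpaff al a x : derivable_pt_lim (fun s => exp (- al * (s - a))) x
   (- al * exp (- al * (x - a))).
Proof.
  assert (H : derivable_pt_lim (fun s => - al * (s - a)) x (- al)).
  { apply dval with (-al * (1 - 0)). 
    apply (derivable_pt_lim_scal (fun s => s - a) (-al) x (1 - 0)).
    apply dminus. apply derivable_pt_lim_id. apply dconst. ring. }
  apply dval with (derive_pt exp (- al * (x - a)) (derivable_pt_exp _) * (- al)).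
  apply (derivable_pt_lim_comp (fun s => - al * (s - a)) exp x (-al)).
  exact H. apply derive_pt_eq_1 with (derivable_pt_exp _). reflexivity.
  rewrite derive_pt_exp. ring.
Qed.

Lemma cexpaff al a x : continuity_pt (fun s => exp (- al * (s - a))) x.
Proof. apply derivable_continuous_pt. exists (- al * exp (- al * (x - a))). apply dexpaff. Qed.

Lemma gronwall (W W' : R -> R) a b al be :
  a < b -> 0 < al -> 0 <= be ->
  (forall c, a <= c <= b -> continuity_pt W c) ->
  (forall t, a < t < b -> derivable_pt_lim W t (W' t)) ->
  (forall t, a < t < b -> W' t <= al * W t + be) ->
  W a = 0 ->
  forall t, a <= t <= b -> W t <= be / al * exp (al * (t - a)).
Proof.
  intros Hab Hal Hbe Hc Hd Hb H0 t Ht.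
  set (G := fun s => (W s + be / al) * exp (- al * (s - a))).
  set (G' := fun s => W' s * exp (- al * (s - a)) + (W s + be/al) * (- al * exp (- al * (s - a)))).
  assert (HG := decr G G' a b Hab).
  assert (Hle : G t <= G a).
  { apply HG; auto.
    - intros c Hc'. unfold G. apply (cmult (fun s => W s + be/al) (fun s => exp (-al*(s-a)))). apply (cplus W (fun _ => be/al)). auto. apply cconst. apply cexpaff.
    - intros s Hs. unfold G, G'. apply dval with ((W' s + 0) * exp (- al * (s - a)) + (W s + be/al) * (- al * exp (- al * (s - a)))).
      apply (dmult (fun s => W s + be/al) (fun s => exp (-al*(s-a)))). apply (dplus W (fun _ => be/al)). apply Hd; lra. apply (dconst (be/al)). apply dexpaff. ring.
    - intros s Hs. unfold G'. assert (Hw := Hb s Hs).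
      assert (0 < exp (- al * (s - a))) by apply exp_pos.
      assert (E : W' s * exp (- al * (s - a)) + (W s + be / al) * (- al * exp (- al * (s - a)))
               = (W' s - al * W s - be) * exp (- al * (s - a))) by (field; lra).
      rewrite E. assert (W' s - al * W s - be <= 0) by lra. nra. }
  unfold G in Hle. rewrite H0 in Hle. replace (a - a) with 0 in Hle by ring.
  rewrite Rmult_0_r, exp_0, Rmult_1_r, Rplus_0_l in Hle.
  assert (E1 : exp (- al * (t - a)) * exp (al * (t - a)) = 1).
  { rewrite <- exp_plus. replace (- al * (t - a) + al * (t - a)) with 0 by ring. apply exp_0. }
  assert (P : 0 < exp (al * (t - a))) by apply exp_pos.
  assert (Q : (W t + be / al) * exp (- al * (t - a)) * exp (al * (t - a)) <= be / al * exp (al * (t - a))).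
  { apply Rmult_le_compat_r; lra. }
  rewrite Rmult_assoc, E1, Rmult_1_r in Q.
  assert (0 <= be / al) by (unfold Rdiv; apply Rmult_le_pos; [lra| left; apply Rinv_0_lt_compat; lra]).
  lra.
Qed.

Lemma mv_bound (M : mat) (v : vec) i Lh :
  (forall j, (j < 4)%nat -> Rabs (M i j) <= Lh) ->
  Rabs (matvec M v i) <= Lh * (Rabs (v 0%nat) + Rabs (v 1%nat) + Rabs (v 2%nat) + Rabs (v 3%nat)).
Proof.
  intros HM. unfold matvec. cbn [sum_f_R0].
  assert (T : forall j, (j < 4)%nat -> Rabs (M i j * v j) <= Lh * Rabs (v j)).
  { intros j Hj. rewrite Rabs_mult. apply Rmult_le_compat_r. apply Rabs_pos. auto. }
  pose proof (T 0%nat ltac:(lia)). pose proof (T 1%nat ltac:(lia)).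
  pose proof (T 2%nat ltac:(lia)). pose proof (T 3%nat ltac:(lia)).
  pose proof (Rabs_triang (M i 0%nat * v 0%nat + M i 1%nat * v 1%nat + M i 2%nat * v 2%nat) (M i 3%nat * v 3%nat)).
  pose proof (Rabs_triang (M i 0%nat * v 0%nat + M i 1%nat * v 1%nat) (M i 2%nat * v 2%nat)).
  pose proof (Rabs_triang (M i 0%nat * v 0%nat) (M i 1%nat * v 1%nat)).
  lra.
Qed.

Theorem mainTheorem10
  (t1 tau : R) (h : vec -> vec) (Lmat : vec -> vec -> mat) (Lh : R)
  (y xh e : R -> R -> vec) :
  t1 < tau ->
  0 < Lh ->
  (* structure of h *)
  (forall a b i j, (i < 4)%nat -> (j < 4)%nat -> Rabs (Lmat a b i j) <= Lh) ->
  (forall a b i, (i < 4)%nat ->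
      h a i - h b i = matvec (Lmat a b) (vsub a b) i) ->
  (* for each z > 0: y, xh continuous on [t1,tau] and satisfy the ODEs on (t1,tau) *)
  (forall z, 0 < z -> forall i, (i < 4)%nat ->
      cont_on (fun s => y z s i) t1 tau /\ cont_on (fun s => xh z s i) t1 tau) ->
  (forall z, 0 < z -> forall t, t1 < t < tau -> forall i, (i < 4)%nat ->
      derivable_pt_lim (fun s => y z s i) t
        (matvec (Amat z) (y z t) i + h (y z t) i + e z t i)) ->
  (forall z, 0 < z -> forall t, t1 < t < tau -> forall i, (i < 4)%nat ->
      derivable_pt_lim (fun s => xh z s i) t
        (matvec (Amat z) (xh z t) i + h (xh z t) i)) ->
  (forall z, 0 < z -> forall i, (i < 4)%nat -> xh z t1 i = y z t1 i) ->
  (* sup_{[t1,tau]} ||e_y|| = O(z^-1) *)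
  (exists K Z0, forall z, Z0 <= z -> 0 < z -> forall t, t1 <= t <= tau ->
      vnorm (e z t) <= K / z) ->
  (* conclusion: sup_{[t1,tau]} ||y - xh|| = O(z^-1) *)
  exists K Z0, forall z, Z0 <= z -> 0 < z -> forall t, t1 <= t <= tau ->
      vnorm (vsub (y z t) (xh z t)) <= K / z.
Proof.
  intros Htt HLh HLb Hh Hcont Hdy Hdx Hinit [K [Z0 He]].
  set (al := 300 * Lh + 100 * Lh^2 + 20).
  assert (Hal : 0 < al) by (unfold al; nra).
  set (C := sqrt (100 * exp (al * (tau - t1)) / al)).
  exists (Rmax K 0 * C), (Rmax Z0 1).
  intros z Hz Hzp t Ht.
  assert (Hz1 : 1 <= z) by (pose proof (Rmax_r Z0 1); lra).
  assert (HzZ : Z0 <= z) by (pose proof (Rmax_l Z0 1); lra).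
  set (Kp := Rmax K 0).
  assert (HKp : 0 <= Kp) by apply Rmax_r.
  set (D := fun (i : nat) s => y z (clamp t1 tau s) i - xh z (clamp t1 tau s) i).
  set (U := fun s => D 0%nat s + 5/3 * D 1%nat s + D 2%nat s + D 3%nat s).
  set (W := fun s => U s * U s + z * (2 * (D 1%nat s * D 1%nat s) + D 2%nat s * D 2%nat s + D 3%nat s * D 3%nat s)).
  set (Dd := fun (i : nat) s => (matvec (Amat z) (y z s) i + h (y z s) i + e z s i)
                         - (matvec (Amat z) (xh z s) i + h (xh z s) i)).
  set (W' := fun s => 2 * U s * (Dd 0%nat s + 5/3 * Dd 1%nat s + Dd 2%nat s + Dd 3%nat s)
      + z * (4 * D 1%nat s * Dd 1%nat s + 2 * D 2%nat s * Dd 2%nat s + 2 * D 3%nat s * Dd 3%nat s)).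
  set (be := 10 * (Kp / z)^2).
  assert (Hle : t1 <= tau) by lra.
  assert (contD : forall i, (i < 4)%nat -> forall c, continuity_pt (D i) c).
  { intros i Hi c. destruct (Hcont z Hzp i Hi) as [C1 C2].
    exact (cminus _ _ c (clamp_cont (fun s => y z s i) t1 tau c Hle C1)
                       (clamp_cont (fun s => xh z s i) t1 tau c Hle C2)). }
  assert (dD : forall i, (i < 4)%nat -> forall s, t1 < s < tau -> derivable_pt_lim (D i) s (Dd i s)).
  { intros i Hi s Hs. unfold Dd.
    exact (dminus _ _ s _ _ (clamp_deriv (fun s => y z s i) t1 tau s _ Hs (Hdy z Hzp s Hs i Hi))
                       (clamp_deriv (fun s => xh z s i) t1 tau s _ Hs (Hdx z Hzp s Hs i Hi))). }
  assert (c0 := contD 0%nat ltac:(lia)). assert (c1 := contD 1%nat ltac:(lia)).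
  assert (c2 := contD 2%nat ltac:(lia)). assert (c3 := contD 3%nat ltac:(lia)).
  assert (GW : forall s, t1 <= s <= tau -> W s <= be / al * exp (al * (s - t1))).
  { apply (gronwall W W' t1 tau al be Htt Hal).
    - unfold be. nra.
    - intros c _. unfold W, U.
      repeat first [apply c0 | apply c1 | apply c2 | apply c3 | apply cplus | apply cmult | apply cconst].
    - intros s Hs.
      assert (d0 := dD 0%nat ltac:(lia) s Hs). assert (d1 := dD 1%nat ltac:(lia) s Hs).
      assert (d2 := dD 2%nat ltac:(lia) s Hs). assert (d3 := dD 3%nat ltac:(lia) s Hs).
      eapply dval.
      { unfold W, U.
        repeat first [apply d0 | apply d1 | apply d2 | apply d3 | apply dplus | apply dmult | apply dconst]. }
      unfold W', U. cbv beta. ring.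
    - intros s Hs.
      assert (Hs' : t1 <= s <= tau) by lra.
      set (d0 := y z s 0%nat - xh z s 0%nat).
      set (d1 := y z s 1%nat - xh z s 1%nat).
      set (d2 := y z s 2%nat - xh z s 2%nat).
      set (d3 := y z s 3%nat - xh z s 3%nat).
      set (r0 := h (y z s) 0%nat - h (xh z s) 0%nat).
      set (r1 := h (y z s) 1%nat - h (xh z s) 1%nat).
      set (r2 := h (y z s) 2%nat - h (xh z s) 2%nat).
      set (r3 := h (y z s) 3%nat - h (xh z s) 3%nat).
      assert (Rb : forall i, (i < 4)%nat -> Rabs (h (y z s) i - h (xh z s) i) <= Lh * (Rabs d0 + Rabs d1 + Rabs d2 + Rabs d3)).
      { intros i Hi. rewrite Hh by auto. apply mv_bound. intros j Hj. apply HLb; auto. }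
      assert (Se : e z s 0%nat ^ 2 + e z s 1%nat ^ 2 + e z s 2%nat ^ 2 + e z s 3%nat ^ 2 <= (Kp / z)^2).
      { assert (Hv := He z HzZ Hzp s Hs'). unfold vnorm in Hv. cbn [sum_f_R0] in Hv.
        set (S := e z s 0%nat ^ 2 + e z s 1%nat ^ 2 + e z s 2%nat ^ 2 + e z s 3%nat ^ 2) in *.
        assert (S0 : 0 <= S) by (unfold S; nra).
        assert (Hsq := sqrt_sqrt S S0). assert (Hp := sqrt_pos S).
        assert (K/z <= Kp/z) by (apply Rmult_le_compat_r; [left; apply Rinv_0_lt_compat; lra | apply Rmax_l]).
        nra. }
      assert (Kk := key z Lh d0 d1 d2 d3 r0 r1 r2 r3 (e z s 0%nat) (e z s 1%nat) (e z s 2%nat) (e z s 3%nat)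
               Hz1 HLh (Rb 0%nat ltac:(lia)) (Rb 1%nat ltac:(lia)) (Rb 2%nat ltac:(lia)) (Rb 3%nat ltac:(lia))).
      assert (EW : W s = (d0 + 5/3 * d1 + d2 + d3)^2 + z * (2 * d1^2 + d2^2 + d3^2)).
      { unfold W, U, D. rewrite clamp_id by auto. unfold d0, d1, d2, d3. ring. }
      assert (EW' : W' s = 2 * (d0 + 5/3 * d1 + d2 + d3) *
     ((-d0 + 3*z*d1 + z*d2 + z*d3 + r0 + e z s 0%nat) + 5/3*(-(3*z)*d1 + r1 + e z s 1%nat)
      + (2*z*d1 - z*d2 + r2 + e z s 2%nat) + (d0 - z*d3 + r3 + e z s 3%nat))
  + z * (4*d1*(-(3*z)*d1 + r1 + e z s 1%nat) + 2*d2*(2*z*d1 - z*d2 + r2 + e z s 2%nat)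
         + 2*d3*(d0 - z*d3 + r3 + e z s 3%nat))).
      { unfold W', U, D, Dd. rewrite clamp_id by auto. unfold matvec. cbn [sum_f_R0]. unfold Amat.
        unfold d0, d1, d2, d3, r0, r1, r2, r3. ring. }
      rewrite EW, EW'. fold al in Kk. unfold be. 
      assert (10 * (e z s 0%nat ^ 2 + e z s 1%nat ^ 2 + e z s 2%nat ^ 2 + e z s 3%nat ^ 2) <= 10 * (Kp/z)^2) by lra.
      lra.
    - unfold W, U, D. rewrite clamp_id by lra. rewrite !Hinit by (auto; lia). ring. }
  assert (Wt := GW t Ht).
  set (d0 := y z t 0%nat - xh z t 0%nat).
  set (d1 := y z t 1%nat - xh z t 1%nat).
  set (d2 := y z t 2%nat - xh z t 2%nat).
  set (d3 := y z t 3%nat - xh z t 3%nat).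
  assert (EW : W t = (d0 + 5/3 * d1 + d2 + d3)^2 + z * (2 * d1^2 + d2^2 + d3^2)).
  { unfold W, U, D. rewrite clamp_id by auto. unfold d0, d1, d2, d3. ring. }
  assert (SD : d0^2 + d1^2 + d2^2 + d3^2 <= 10 * W t).
  { rewrite EW. set (u := d0 + 5/3 * d1 + d2 + d3).
    replace d0 with (u - 5/3*d1 - d2 - d3) by (unfold u; ring).
    assert (0 <= (u + 5/3*d1)^2) by apply pow2_ge_0.
    assert (0 <= (u + d2)^2) by apply pow2_ge_0.
    assert (0 <= (u + d3)^2) by apply pow2_ge_0.
    assert (0 <= (5/3*d1 - d2)^2) by apply pow2_ge_0.
    assert (0 <= (5/3*d1 - d3)^2) by apply pow2_ge_0.
    assert (0 <= (d2 - d3)^2) by apply pow2_ge_0.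
    assert (z*d1^2 >= d1^2) by nra. assert (z*d2^2 >= d2^2) by nra. assert (z*d3^2 >= d3^2) by nra.
    nra. }
  assert (Eexp : exp (al * (t - t1)) <= exp (al * (tau - t1))).
  { destruct (Req_dec t tau) as [E|N]. subst; lra.
    left. apply exp_increasing. apply Rmult_lt_compat_l; lra. }
  assert (Bnd : d0^2 + d1^2 + d2^2 + d3^2 <= (Kp * C / z)^2).
  { assert (Cs : C^2 = 100 * exp (al * (tau - t1)) / al).
    { unfold C. rewrite pow2_sqrt; auto.
      unfold Rdiv. apply Rmult_le_pos. pose proof (exp_pos (al*(tau-t1))). lra.
      left. apply Rinv_0_lt_compat. lra. }
    replace ((Kp * C / z)^2) with (10 * (10 * (Kp/z)^2 / al * exp (al * (tau - t1)))).
    2:{ replace ((Kp * C / z)^2) with ((Kp/z)^2 * C^2) by (field; lra). rewrite Cs. field. lra. }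
    apply Rle_trans with (10 * W t). auto.
    apply Rmult_le_compat_l. lra. apply Rle_trans with (be / al * exp (al * (t - t1))). auto.
    apply Rmult_le_compat_l. unfold be, Rdiv. apply Rmult_le_pos. nra. left; apply Rinv_0_lt_compat; lra.
    auto. }
  unfold vnorm, vsub. cbn [sum_f_R0]. fold d0 d1 d2 d3.
  assert (P : 0 <= Kp * C / z).
  { unfold Rdiv. apply Rmult_le_pos. apply Rmult_le_pos. auto. apply sqrt_pos. left; apply Rinv_0_lt_compat; lra. }
  rewrite <- (sqrt_pow2 (Kp * C / z)) by auto.
  apply sqrt_le_1_alt. auto.
Qed.
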